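(* Let $A$ be a finite alphabet and $L\subseteq A^*$. If $L\subseteq\bigcup_iP_i\subseteq{\downarrow}L$ for a family $(P_i)_i$ of D-products of length at most $\ell$, then $h({\downarrow}L)\leq\ell+1$ and $h({\downarrow}_<L)\leq\ell+1$.
   Context: A D-product is a regular expression $E_1E_2\cdots E_\ell$ where each $E_i$ is either $B^*$ for some subalphabet $B\subseteq A$ or a single letter $a\in A$; $\ell$ is its length, and it also denotes its language. $u\sqsubseteq v$ (subword) means $u=a_1\cdots a_n$ with letters $a_i$ and $v=v_0a_1v_1\cdots a_nv_n$; $u\sqsubset v$ means $u\sqsubseteq v$, $u\ne v$. ${\downarrow}L=\{v~|~\exists u\in L: v\sqsubseteq u\}$, ${\downarrow}_<L=\{v~|~\exists u\in L:v\sqsubset u\}$. $u\sim_n v$ iff $u,v$ have the same subwords of length at most $n$; $L$ is $n$-PT if it is a union of $\sim_n$-classes, and $h(L)$ is the least such $n$. *)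

(* Defs.v *)
From mathcomp Require Import all_boot.
Set Implicit Arguments. Unset Strict Implicit. Unset Printing Implicit Defensive.

Section Defs.
Variable A : finType.

(* A factor of a D-product: either B^* for a subalphabet B, or a letter a. *)
Inductive ditem : Type :=
  | DStar of {set A}
  | DLetter of A.

Definition dproduct := seq ditem.

Fixpoint in_dproduct (P : dproduct) (w : seq A) : Prop :=
  match P with
  | [::] => w = [::]
  | DLetter a :: P' => exists w', w = a :: w' /\ in_dproduct P' w'
  | DStar B :: P' => exists w1 w2, w = w1 ++ w2 /\ all (fun x => x \in B) w1
                                   /\ in_dproduct P' w2
  end.

(* Subword order: u ⊑ v is mathcomp's [subseq u v]; strict: u ⊏ v. *)
Definition strict_subword (u v : seq A) : bool := subseq u v && (u != v).

Definition downcl (L : seq A -> Prop) : seq A -> Prop :=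
  fun v => exists u, L u /\ subseq v u.
Definition sdowncl (L : seq A -> Prop) : seq A -> Prop :=
  fun v => exists u, L u /\ strict_subword v u.

Definition simn (n : nat) (u v : seq A) : Prop :=
  forall w : seq A, size w <= n -> subseq w u = subseq w v.

Definition nPT (n : nat) (L : seq A -> Prop) : Prop :=
  forall u v, simn n u v -> (L u <-> L v).

(* h(L) <= m: the least n with L n-PT exists and is at most m. *)
Definition h_le (L : seq A -> Prop) (m : nat) : Prop :=
  exists n, n <= m /\ nPT n L.
End Defs.

(* Main.v *)
Require Import Defs.
From mathcomp Require Import all_boot.
From Stdlib Require Import Classical.
From mathcomp Require Import zify.
Set Implicit Arguments. Unset Strict Implicit. Unset Printing Implicit Defensive.

Section Aux.
Variable A : finType.

Fixpoint dn (P : dproduct A) (v : seq A) : Prop :=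
  match P with
  | [::] => v = [::]
  | DLetter a :: P' => dn P' v \/ exists v', v = a :: v' /\ dn P' v'
  | DStar B :: P' => exists v1 v2, v = v1 ++ v2 /\ all (fun x => x \in B) v1
                                   /\ dn P' v2
  end.

Lemma subseq_split (v u1 u2 : seq A) : subseq v (u1 ++ u2) ->
  exists v1 v2, v = v1 ++ v2 /\ subseq v1 u1 /\ subseq v2 u2.
Proof.
elim: u1 v => [|y u1 IH] v.
  by move=> h; exists [::], v; rewrite sub0seq.
case: v => [|x v'].
  by move=> _; exists [::], [::]; rewrite !sub0seq.
rewrite cat_cons /=; case: eqP => [->|nxy] h.
  have [v1 [v2 [-> [h1 h2]]]] := IH _ h.
  by exists (y :: v1), v2; rewrite /= eqxx.
have [v1 [v2 [e [h1 h2]]]] := IH _ h.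
exists v1, v2; split=> //; split=> //.
exact: subseq_trans h1 (subseq_cons _ _).
Qed.

Lemma dn_of_in (P : dproduct A) u v : in_dproduct P u -> subseq v u -> dn P v.
Proof.
elim: P u v => [|[B|a] P IH] u v /=.
- by move=> -> /eqP.
- move=> [w1 [w2 [-> [hB hP]]]] /subseq_split [v1 [v2 [-> [h1 h2]]]].
  exists v1, v2; split=> //; split; last exact: IH h2.
  apply/allP=> x /(mem_subseq h1) xw; exact: (allP hB).
- move=> [w' [-> hP]]; case: v => [|x v].
    by left; apply: (IH w'); [|exact: sub0seq].
  rewrite /=; case: eqP => [-> h|_ h].
    by right; exists v; split=> //; exact: IH h.
  by left; exact: IH h.
Qed.

Lemma in_of_dn (P : dproduct A) v : dn P v -> exists u, in_dproduct P u /\ subseq v u.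
Proof.
elim: P v => [|[B|a] P IH] v /=.
- by move=> ->; exists [::].
- move=> [v1 [v2 [-> [hB /IH [u [hu hs]]]]]].
  exists (v1 ++ u); split; first by exists v1, u.
  by rewrite subseq_cat2l.
- move=> [/IH [u [hu hs]]|[v' [-> /IH [u [hu hs]]]]].
    exists (a :: u); split; first by exists u.
    exact: subseq_trans hs (subseq_cons _ _).
  by exists (a :: u); split; [exists u | rewrite /= eqxx].
Qed.

Lemma dn_down (P : dproduct A) v w : dn P v -> subseq w v -> dn P w.
Proof.
move=> /in_of_dn [u [hu hs]] hw; apply: (dn_of_in hu); exact: subseq_trans hw hs.
Qed.

Lemma dn_nil (P : dproduct A) : dn P [::].
Proof. by apply: (@dn_down P [::]) => //; elim: P => [|[B|a] P IH] //=; [exists [::], [::] | left]. Qed.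

Lemma subseq_cons_neq (y c : A) w v : y != c -> subseq (y :: w) (c :: v) -> subseq (y :: w) v.
Proof. by move=> /negbTE h /=; rewrite h. Qed.

Lemma split_B (B : {set A}) (v : seq A) : all (fun x => x \in B) v \/
  exists v1 c v2, v = v1 ++ c :: v2 /\ all (fun x => x \in B) v1 /\ c \notin B.
Proof.
elim: v => [|x v [h|[v1 [c [v2 [-> [h1 h2]]]]]]]; first by left.
- case hx: (x \in B); first by left; rewrite /= hx h.
  by right; exists [::], x, v; rewrite hx.
- case hx: (x \in B).
    by right; exists (x :: v1), c, v2; rewrite /= hx h1.
  by right; exists [::], x, (v1 ++ c :: v2); rewrite hx.
Qed.

Lemma witness_head (P : dproduct A) (c : A) w x :
  subseq w (c :: x) -> size w <= (size P).+1 -> ~ dn P w ->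
  exists y, subseq (c :: y) (c :: x) /\ size (c :: y) <= (size P).+2 /\ ~ dn P (c :: y).
Proof.
case: w => [|y w] hs hsz hn; first by case: hn; exact: dn_nil.
case: (eqVneq y c) => [e|ne].
  subst y; exists w; split=> //; split=> //; exact: leqW.
exists (y :: w); split; first by rewrite /= eqxx; exact: subseq_cons_neq hs.
split=> //; move=> h; apply: hn; apply: dn_down h _; exact: subseq_cons.
Qed.

Lemma key (P : dproduct A) v : ~ dn P v ->
  exists w, subseq w v /\ size w <= (size P).+1 /\ ~ dn P w.
Proof.
elim: P v => [|[B|a] P IH] v /=.
- case: v => [|x v] // _; exists [:: x]; split; first by rewrite sub1seq mem_head.
  by split.
- move=> hn.
  have [hall|[v1 [c [v2 [ev [h1 h2]]]]]] := split_B B v.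
    by case: hn; exists v, [::]; rewrite cats0; split=> //; split=> //; exact: dn_nil.
  have hn2 : ~ dn P (c :: v2) by move=> h; apply: hn; exists v1, (c :: v2).
  have [w [hs [hsz hw]]] := IH _ hn2.
  have [y [hs' [hsz' hy]]] := witness_head hs hsz hw.
  exists (c :: y); split; first by rewrite ev; exact: subseq_trans hs' (suffix_subseq _ _).
  split=> //; move=> [x1 [x2 [e [hx1 hx2]]]].
  case: x1 e hx1 => [|z x1] /=.
    by move=> e _; apply: hy; rewrite e.
  by move=> [<- _] /andP [hc _]; rewrite hc in h2.
- move=> hn.
  have hn1 : ~ dn P v by move=> h; apply: hn; left.
  case: v hn hn1 => [|b v'] hn hn1; first by case: hn1; exact: dn_nil.
  case: (eqVneq b a) => [e|ne].
    subst b.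
    have hn2 : ~ dn P v' by move=> h; apply: hn; right; exists v'.
    have [w [hs [hsz hw]]] := IH _ hn2.
    exists (a :: w); split; first by rewrite /= eqxx.
    split=> //; move=> [h|[w' [[<-] h]]]; last exact: hw h.
    by apply: hw; apply: dn_down h _; exact: subseq_cons.
  have [w [hs [hsz hw]]] := IH _ hn1.
  have [y [hs' [hsz' hy]]] := witness_head hs hsz hw.
  exists (b :: y); split=> //; split=> //.
  move=> [h|[w' [[e _] _]]]; first exact: hy h.
  by rewrite e eqxx in ne.
Qed.

Lemma pump (P : dproduct A) v : in_dproduct P v ->
  size v <= size P \/ exists v', in_dproduct P v' /\ subseq v v' /\ size v < size v'.
Proof.
elim: P v => [|[B|a] P IH] v /=.
- by move=> ->; left.
- move=> [w1 [w2 [-> [hB hP]]]].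
  case: w1 hB => [|x w1] hB /=.
    have [h|[v' [h1 [h2 h3]]]] := IH _ hP; first by left; exact: leqW.
    by right; exists v'; split=> //; exists [::], v'.
  right; exists (x :: x :: w1 ++ w2); split.
    by exists [:: x, x & w1], w2; split=> //; split=> //=; move: hB => /= /andP [-> ->].
  by split; [exact: subseq_cons | rewrite /=].
- move=> [w' [-> hP]].
  have [h|[v' [h1 [h2 h3]]]] := IH _ hP; first by left.
  by right; exists (a :: v'); split; [exists v' | rewrite /= eqxx].
Qed.

Lemma simn_sym n (u v : seq A) : simn n u v -> simn n v u.
Proof. by move=> h w hw; rewrite h. Qed.

Lemma simn_small n (u v : seq A) : simn n.+1 u v -> size v <= n -> u = v.
Proof.
move=> h hv.
have hvu : subseq v u by rewrite h ?subseq_refl // leqW.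
have hsz : size u <= size v.
  rewrite leqNgt; apply/negP=> lt.
  have hw : subseq (take (size v).+1 u) v.
    rewrite -h ?take_subseq // size_take; case: ifP => hh; lia.
  move: (size_subseq hw); rewrite size_take; case: ifP => hh; first by rewrite ltnn.
  by rewrite leqNgt lt.
symmetry; apply/eqP; rewrite -(size_subseq_leqif hvu).2 eqn_leq hsz (size_subseq hvu). done.
Qed.

End Aux.

Theorem corollary13 (A : finType) (L : seq A -> Prop) (I : Type)
    (P : I -> dproduct A) (l : nat) :
  (forall i, size (P i) <= l) ->
  (forall w, L w -> exists i, in_dproduct (P i) w) ->
  (forall i w, in_dproduct (P i) w -> downcl L w) ->
  h_le (downcl L) l.+1 /\ h_le (sdowncl L) l.+1.
Proof.
move=> hsz hcov hsub.
have part1 : forall u v, simn l.+1 u v -> downcl L u -> downcl L v.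
  move=> u v huv [x [hx hux]].
  have [i hi] := hcov _ hx.
  have hdu : dn (P i) u := dn_of_in hi hux.
  apply: NNPP => hnv.
  have hnd : ~ dn (P i) v.
    move=> /in_of_dn [y [hy hvy]]; apply: hnv.
    have [z [hz hyz]] := hsub _ _ hy; exists z; split=> //; exact: subseq_trans hvy hyz.
  have [w [hw [hwsz hwn]]] := key hnd.
  apply: hwn; apply: dn_down hdu _.
  by rewrite huv // (leq_trans hwsz) // ltnS.
have part2 : forall u v, simn l.+1 u v -> sdowncl L u -> sdowncl L v.
  move=> u v huv hu; apply: NNPP => hnv.
  have hdu : downcl L u.
    by case: hu => [x [hx /andP [h _]]]; exists x.
  have [x [hx hvx]] := part1 _ _ huv hdu.
  case: (eqVneq v x) => [e|ne]; last first.
    by apply: hnv; exists x; split=> //; rewrite /strict_subword hvx ne.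
  subst x.
  have [i hi] := hcov _ hx.
  have [hs|[v' [hv' [hvv' hlt]]]] := pump hi.
    have e : u = v by apply: simn_small huv (leq_trans hs (hsz i)).
    by subst u.
  have [z [hz hyz]] := hsub _ _ hv'.
  apply: hnv; exists z; split=> //; rewrite /strict_subword (subseq_trans hvv' hyz) /=.
  apply/negP=> /eqP e; subst z.
  by move: (size_subseq hyz); rewrite leqNgt hlt.
split; exists l.+1; split=> // u v huv; split.
- exact: part1.
- apply: part1; exact: simn_sym.
- exact: part2.
- apply: part2; exact: simn_sym.
Qed.
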